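(* Let $X$ be a real Banach space. Then $X$ has the SD2P if and only if for every $n\in\mathbb{N}$, $x_1,\dots,x_n\in B_X$ and $\varepsilon>0$ there exist $m\in\mathbb{N}$, elements $y_{ij}\in B_X$ ($1\le i\le n$, $1\le j\le m$) and $\alpha_1,\dots,\alpha_m>0$ with $\sum_{j=1}^m\alpha_j=1$ such that $\big\|x_i-\sum_{j=1}^m\alpha_jy_{ij}\big\|<\varepsilon$ for every $i=1,\dots,n$ and $\big\|\sum_{i=1}^n\frac1n y_{ij}\big\|>1-\varepsilon$ for every $j=1,\dots,m$.
   Context: $X$ has the strong diameter two property (SD2P) if every convex combination of slices of $B_X$ has diameter 2, where a slice is $\{x\in B_X: f(x)>1-\alpha\}$ with $f\in S_{X^*}$, $\alpha>0$. *)

(* Defs.v *)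
From HB Require Import structures.
From mathcomp Require Import all_boot all_order all_algebra.
From mathcomp Require Import all_classical all_reals all_analysis.
Set Implicit Arguments. Unset Strict Implicit. Unset Printing Implicit Defensive.
Import Order.TTheory GRing.Theory Num.Theory.
Import numFieldNormedType.Exports.
Local Open Scope ring_scope.
Local Open Scope classical_set_scope.

Section SD2P.
Variables (R : realType) (X : normedModType R).

Definition ballX : set X := [set x | `|x| <= 1].

(* f is a norm-one (hence continuous) linear functional: f \in S_{X^*}.
   ||f|| = sup_{x in B_X} |f x| = 1 is written out. *)
Definition unit_dual (f : X -> R) : Prop :=
  [/\ (forall x y, f (x + y) = f x + f y),
      (forall (a : R) x, f (a *: x) = a * f x),
      (forall x, `|f x| <= `|x|) &
      (forall e : R, 0 < e -> exists2 x, `|x| <= 1 & f x > 1 - e)].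

Definition slice (f : X -> R) (alpha : R) : set X :=
  [set x | `|x| <= 1 /\ f x > 1 - alpha].

Definition convex_comb_sets (n : nat) (lam : 'I_n -> R) (S : 'I_n -> set X)
  : set X :=
  [set z | exists x : 'I_n -> X, (forall i, S i (x i)) /\ z = \sum_(i < n) lam i *: x i].

Definition diam_eq2 (C : set X) : Prop :=
  (forall u v, C u -> C v -> `|u - v| <= 2) /\
  (forall e : R, 0 < e -> exists u v, [/\ C u, C v & `|u - v| > 2 - e]).

Definition SD2P : Prop :=
  forall (n : nat) (lam : 'I_n -> R) (f : 'I_n -> X -> R) (alpha : 'I_n -> R),
    (forall i, 0 < lam i) -> \sum_(i < n) lam i = 1 ->
    (forall i, unit_dual (f i)) -> (forall i, 0 < alpha i) ->
    diam_eq2 (convex_comb_sets lam (fun i => slice (f i) (alpha i))).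

End SD2P.

(* Main.v *)
Require Import Defs.
From HB Require Import structures.
From mathcomp Require Import all_boot all_order all_algebra.
From mathcomp Require Import all_classical all_reals all_analysis.
From mathcomp Require Import lra zify.
Import Order.TTheory GRing.Theory Num.Theory.
Import numFieldNormedType.Exports.
Local Open Scope ring_scope.

Module SD2PHelpers.
Local Open Scope classical_set_scope.

Section InfLemmas.
Variable R : realType.
Lemma le_inf_add (E1 E2 : set R) c : E1 !=set0 -> E2 !=set0 ->
  (forall a b, E1 a -> E2 b -> c <= a + b) -> c <= inf E1 + inf E2.
Proof.
move=> n1 n2 H.
have H1 : forall b, E2 b -> c - b <= inf E1.
  move=> b Eb; apply: lb_le_inf => // a Ea; rewrite lerBlDr; exact: H.
rewrite -lerBlDl; apply: lb_le_inf => // b Eb; rewrite lerBlDl -lerBlDr; exact: H1.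
Qed.
Lemma le_inf_scale (E : set R) c t : E !=set0 -> 0 < t ->
  (forall a, E a -> c <= t * a) -> c <= t * inf E.
Proof.
move=> n1 t0 H; rewrite -ler_pdivrMl //; apply: lb_le_inf => // a Ea.
rewrite ler_pdivrMl //; exact: H.
Qed.
Lemma inf_le_elt (E : set R) m a : (forall b, E b -> m <= b) -> E a -> inf E <= a.
Proof. move=> H Ea; apply: ge_inf => //; exists m => b Eb; exact: H. Qed.
End InfLemmas.

Section HahnBanach.
Variables (R : realType) (V : lmodType R).

Definition sublin (q : V -> R) :=
  (forall x y, q (x + y) <= q x + q y) /\ (forall (t : R) x, 0 <= t -> q (t *: x) <= t * q x).

Lemma sublin0 q : sublin q -> q 0 = 0.
Proof.
move=> [Ha Hs]; apply/eqP; rewrite eq_le; apply/andP; split.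
  by have := Hs 0 0 (lexx _); rewrite scale0r mul0r.
by have := Ha 0 0; rewrite addr0 -lerBlDl subrr.
Qed.

Lemma sublin_lb q x : sublin q -> - q (- x) <= q x.
Proof.
move=> hq; have := hq.1 x (- x); rewrite subrr sublin0 // => H.
by rewrite -subr_ge0 opprK.
Qed.

Lemma sublin_scale q t x : sublin q -> 0 <= t -> q (t *: x) = t * q x.
Proof.
move=> hq; rewrite le_eqVlt => /orP[/eqP<-|t0].
  by rewrite scale0r mul0r sublin0.
apply/eqP; rewrite eq_le (hq.2 _ _ (ltW t0)) /=.
have ti : 0 <= t^-1 by rewrite invr_ge0 ltW.
have := hq.2 t^-1 (t *: x) ti.
rewrite scalerA mulVf ?gt_eqF // scale1r.
by move=> H; rewrite -[q (t *: x)](mulVKf (lt0r_neq0 t0)) ler_pM2l.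
Qed.

Definition qshift (q : V -> R) (y : V) (x : V) :=
  inf [set r | exists2 t : R, 0 <= t & r = q (x + t *: y) - t * q y].

Section QS.
Variables (q : V -> R) (y : V) (hq : sublin q).

Let elts x := [set r | exists2 t : R, 0 <= t & r = q (x + t *: y) - t * q y].

Lemma elts_lb x r : elts x r -> - q (- x) <= r.
Proof.
case=> t t0 ->; rewrite lerBrDr -(sublin_scale q t y hq t0).
have := hq.1 (x + t *: y) (- x); rewrite addrC addKr => H.
by rewrite addrC -lerBrDr opprK.
Qed.

Lemma elts_ne x : elts x !=set0.
Proof. by exists (q (x + 0 *: y) - 0 * q y); exists 0. Qed.

Lemma qshift_le x : qshift q y x <= q x.
Proof.
apply: (@inf_le_elt _ _ (- q (- x))); first exact: elts_lb.
by exists 0 => //; rewrite scale0r addr0 mul0r subr0.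
Qed.

Lemma qshift_neg : qshift q y (- y) <= - q y.
Proof.
apply: (@inf_le_elt _ _ (- q (- - y))); first exact: elts_lb.
by exists 1 => //; rewrite scale1r addNr sublin0 // mul1r sub0r.
Qed.

Lemma qshift_lb x : - q (- x) <= qshift q y x.
Proof. apply: lb_le_inf; [exact: elts_ne| move=> r; exact: elts_lb]. Qed.

Lemma qshift_sublin : sublin (qshift q y).
Proof.
split.
  move=> x1 x2; apply: le_inf_add; try exact: elts_ne.
  move=> a b [t1 t10 ->] [t2 t20 ->].
  apply: (@le_trans _ _ (q (x1 + x2 + (t1 + t2) *: y) - (t1 + t2) * q y)).
    apply: (@inf_le_elt _ _ (- q (- (x1 + x2)))); first exact: elts_lb.
    by exists (t1 + t2) => //; rewrite addr_ge0.
  have := hq.1 (x1 + t1 *: y) (x2 + t2 *: y).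
  rewrite scalerDl addrACA mulrDl => H.
lra.
move=> t x; rewrite le_eqVlt => /orP[/eqP<-|t0].
  rewrite scale0r mul0r (le_trans (qshift_le 0)) //.
  by rewrite -(scale0r 0) (le_trans (hq.2 0 0 (lexx _))) // mul0r.
apply: le_inf_scale => //; first exact: elts_ne.
move=> a [s s0 ->].
apply: (@le_trans _ _ (q (t *: x + (t * s) *: y) - (t * s) * q y)).
  apply: (@inf_le_elt _ _ (- q (- (t *: x)))); first exact: elts_lb.
  by exists (t * s) => //; rewrite mulr_ge0 // ltW.
rewrite -scalerA -scalerDr mulrBr mulrA lerD2r; exact: hq.2 (ltW t0).
Qed.
End QS.


Lemma HB_min (p : V -> R) : sublin p -> exists g : V -> R,
  [/\ (forall x y, g (x + y) = g x + g y), (forall a x, g (a *: x) = a * g x)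
    & forall x, g x <= p x].
Proof.
move=> hp.
pose T := {q : V -> R | sublin q /\ forall x, q x <= p x}.
pose Rl := fun a b : T => `[< forall x, sval b x <= sval a x >].
pose t0 : T := exist _ p (conj hp (fun x => lexx _)).
have sv : forall a : T, sublin (sval a) /\ forall x, sval a x <= p x by move=> [a h].
have [m mmax] : exists t, premaximal Rl t.
  apply: (@ZL_preorder T t0 Rl).
  - by move=> a; apply/asboolP => x; exact: lexx.
  - move=> a b c /asboolP ab /asboolP bc; apply/asboolP => x.
    exact: le_trans (bc x) (ab x).
  move=> A Atot.
  case: (pselect (A !=set0)) => [[a0 Aa0]|A0]; last first.
    by exists t0 => s As; exfalso; apply: A0; exists s.
  pose qi x := inf [set sval a x | a in A].
  have lbq : forall (a : T) x, - p (- x) <= sval a x.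
    move=> [a [sa pa]] x /=; apply: le_trans _ (sublin_lb a x sa).
    by rewrite lerN2; exact: pa.
  have ne : forall x, [set sval a x | a in A] !=set0.
    by move=> x; exists (sval a0 x); exists a0.
  have qile : forall a x, A a -> qi x <= sval a x.
    move=> a x Aa; apply: (@inf_le_elt _ _ (- p (- x))).
      by move=> r [b _ <-]; exact: lbq.
    by exists a.
  have sq : sublin qi.
    split.
      move=> x y; apply: le_inf_add => //.
      move=> _ _ [a Aa <-] [b Ab <-].
      case: (Atot a b Aa Ab) => /asboolP H.
        apply: le_trans (qile b _ Ab) _.
        apply: le_trans ((sv b).1.1 x y) _.
        by rewrite lerD2r; exact: H.
      apply: le_trans (qile a _ Aa) _.
      apply: le_trans ((sv a).1.1 x y) _.
      by rewrite lerD2l; exact: H.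
    move=> t x; rewrite le_eqVlt => /orP[/eqP<-|tpos].
      rewrite scale0r mul0r; apply: le_trans (qile a0 0 Aa0) _.
      by rewrite sublin0 //; exact: (sv a0).1.
    apply: le_inf_scale => //.
    move=> _ [a Aa <-]; apply: le_trans (qile a _ Aa) _.
    exact: (sv a).1.2 _ _ (ltW tpos).
  have qip : forall x, qi x <= p x.
    by move=> x; exact: le_trans (qile a0 x Aa0) ((sv a0).2 x).
  by exists (exist _ qi (conj sq qip)) => s As; apply/asboolP => x /=; exact: qile.
pose q := sval m.
have hq : sublin q := (sv m).1.
have hqp : forall x, q x <= p x := (sv m).2.
have neg : forall y, q (- y) = - q y.
  move=> y.
  pose s : T := exist _ (qshift q y)
    (conj (qshift_sublin q y hq) (fun x => le_trans (qshift_le q y hq x) (hqp x))).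
  have : Rl m s by apply/asboolP => x; exact: qshift_le.
  move/mmax/asboolP => /(_ (- y)) /= H.
  apply/eqP; rewrite eq_le (le_trans H (qshift_neg q y hq)) /=.
  by rewrite lerNl; exact: sublin_lb.
have add : forall x y, q (x + y) = q x + q y.
  move=> x y; apply/eqP; rewrite eq_le hq.1 /=.
  have := hq.1 (- x) (- y); rewrite -opprD !neg.
  by rewrite -opprD lerN2.
exists q; split => //.
move=> a x; case: (lerP 0 a) => a0; first exact: sublin_scale.
have : a *: x = (- a) *: (- x) by rewrite scaleNr scalerN opprK.
move=> ->; rewrite sublin_scale //; last by rewrite oppr_ge0 ltW.
by rewrite neg mulrN mulNr opprK.
Qed.

Lemma HB_norming (p : V -> R) (v : V) : sublin p -> exists g : V -> R,
  [/\ (forall x y, g (x + y) = g x + g y), (forall a x, g (a *: x) = a * g x),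
     (forall x, g x <= p x) & p v <= g v].
Proof.
move=> hp; have [g [ga gs gp]] := @HB_min _ (qshift_sublin p v hp).
exists g; split => //.
  by move=> x; exact: le_trans (gp x) (qshift_le p v hp x).
have := le_trans (gp (- v)) (qshift_neg p v hp).
have -> : g (- v) = - g v by rewrite -scaleN1r gs mulN1r.
by rewrite lerN2.
Qed.

End HahnBanach.
Arguments sublin {R V}.
Arguments HB_norming {R V}.
Arguments HB_min {R V}.


Section Normed.
Variables (R : realType) (X : normedModType R).

Lemma norm_sublin : sublin (fun x : X => `|x|).
Proof.
split; first by move=> x y; exact: ler_normD.
by move=> t x t0; rewrite normrZ ger0_norm.
Qed.

Lemma exists_unit_dual : (exists x : X, x != 0) -> exists f : X -> R, unit_dual f.
Proof.
move=> [v v0]; have [g [ga gs gp gv]] := @HB_norming _ _ _ v norm_sublin.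
have gN : forall x, g (- x) = - g x by move=> x; rewrite -scaleN1r gs mulN1r.
exists g; split => //.
  move=> x; rewrite ler_norml gp andbT lerNl -gN.
  by rewrite (le_trans (gp _)) // normrN.
have nv : 0 < `|v| by rewrite normr_gt0.
move=> e e0; exists (`|v|^-1 *: v).
  have nvi : 0 <= `|v|^-1 by rewrite invr_ge0 ltW.
  by rewrite normrZ ger0_norm // mulVf // lt0r_neq0.
rewrite gs (@lt_le_trans _ _ 1) //; first by rewrite ltrBlDr ltrDl.
by rewrite ler_pdivlMl // mulr1.
Qed.

Lemma ud_sum (f : X -> R) (I : Type) (r : seq I) (P : pred I) (F : I -> X) :
  unit_dual f -> f (\sum_(i <- r | P i) F i) = \sum_(i <- r | P i) f (F i).
Proof.
move=> [fa fs _ _]; apply: (big_morph f fa).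
by rewrite -(scale0r (0 : X)) fs mul0r.
Qed.

Lemma avg_norm_le1 n (n0 : (0 < n)%N) (d : 'I_n -> X) :
  (forall i, `|d i| <= 1) -> `|\sum_(i < n) n%:R^-1 *: d i| <= 1.
Proof.
move=> hd; apply: (le_trans (ler_norm_sum _ _ _)).
have lam1 : \sum_(i < n) n%:R^-1 = 1 :> R.
  rewrite sumr_const card_ord.
by rewrite -[LHS]mulr_natr mulVf // pnatr_eq0 -lt0n.
rewrite -[X in _ <= X]lam1; apply: ler_sum => i _.
rewrite normrZ ger0_norm ?invr_ge0 ?ler0n //.
by rewrite -[X in _ <= X]mulr1 ler_wpM2l ?invr_ge0 ?ler0n.
Qed.

Lemma sd2p_point (sd : SD2P X) n (n0 : (0 < n)%N) (f : 'I_n -> X -> R)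
  (eta eps : R) : (forall i, unit_dual (f i)) -> 0 < eta -> 0 < eps ->
  exists d : 'I_n -> X, (forall i, `|d i| <= 1 /\ f i (d i) > 1 - eta) /\
     `|\sum_(i < n) n%:R^-1 *: d i| > 1 - eps.
Proof.
move=> fud eta0 eps0.
have lam0 : forall i : 'I_n, 0 < n%:R^-1 :> R by move=> _; rewrite invr_gt0 ltr0n.
have lam1 : \sum_(i < n) n%:R^-1 = 1 :> R.
  by rewrite sumr_const card_ord -[LHS]mulr_natr mulVf // pnatr_eq0 -lt0n.
have [_ H] := sd n (fun _ => n%:R^-1) f (fun _ => eta) lam0 lam1 fud (fun _ => eta0).
have [u [w [[du [hdu ->]] [dw [hdw ->]] H2]]] := H eps eps0.
exists du; split; first by move=> i; exact: hdu i.
have nw := @avg_norm_le1 n n0 _ (fun i => (hdw i).1).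
have := ler_normB (\sum_(i < n) n%:R^-1 *: du i) (\sum_(i < n) n%:R^-1 *: dw i).
move: H2 nw; move: (`|_ - _|) (`|\sum_(i < n) n%:R^-1 *: du i|) (`|\sum_(i < n) n%:R^-1 *: dw i|) => a b c.
clear H hdu hdw lam0 lam1 fud sd; lra.
Qed.

End Normed.


Lemma arith1 {R : realType} {T eps u v w : R} : 0 <= T * eps -> 0 < eps ->
  u <= T * (eps / 2) -> (1 + T) * eps <= w -> w <= v + u -> eps <= v.
Proof. move=> *; lra. Qed.

Section Forward.
Variables (R : realType) (X : normedModType R) (n : nat) (n0 : (0 < n)%N).
Variables (x : 'I_n -> X) (eps : R).
Hypothesis hx : forall i, `|x i| <= 1.
Hypothesis eps0 : 0 < eps.

Definition Dp (d : 'I_n -> X) :=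
  (forall i, `|d i| <= 1) /\ 1 - eps < `|\sum_(i < n) n%:R^-1 *: d i|.

Hypothesis far : forall m (y : 'I_n -> 'I_m -> X) (a : 'I_m -> R),
  (forall i j, `|y i j| <= 1) -> (forall j, 0 < a j) -> \sum_(j < m) a j = 1 ->
  (forall j, Dp (fun i => y i j)) -> exists i, eps <= `|x i - \sum_(j < m) a j *: y i j|.

Variable d0 : 'I_n -> X.
Hypothesis hd0 : Dp d0.

Local Notation V := ('I_n -> X).

Definition Nrm (z : V) := \sum_(i < n) `|z i|.

Lemma Nrm_ge0 z : 0 <= Nrm z.
Proof. by apply: sumr_ge0 => i _. Qed.

Lemma NrmD z1 z2 : Nrm (z1 + z2) <= Nrm z1 + Nrm z2.
Proof. rewrite /Nrm -big_split /=; apply: ler_sum => i _; exact: ler_normD. Qed.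

Lemma NrmZ (s : R) z : Nrm (s *: z) = `|s| * Nrm z.
Proof. rewrite /Nrm mulr_sumr; apply: eq_bigr => i _; exact: normrZ. Qed.

Lemma Nrm_ge_i z i : `|z i| <= Nrm z.
Proof.
rewrite /Nrm (bigD1 i) //= lerDl; by apply: sumr_ge0 => j _.
Qed.

Lemma sum_fct (M : nat) (F : 'I_M -> V) i : (\sum_(j < M) F j) i = \sum_(j < M) F j i.
Proof. by rewrite fct_sumE. Qed.
Lemma fB (f g : V) i : (f - g) i = f i - g i. Proof. by []. Qed.
Lemma fD (f g : V) i : (f + g) i = f i + g i. Proof. by []. Qed.
Lemma fN (f : V) i : (- f) i = - f i. Proof. by []. Qed.
Lemma fZ (f : V) (a : R) i : (a *: f) i = a *: f i. Proof. by []. Qed.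
Lemma f0 i : (0 : V) i = 0. Proof. by []. Qed.

Lemma sum_concat (W : nmodType) (M1 M2 : nat) (F1 : 'I_M1 -> W) (F2 : 'I_M2 -> W) :
  \sum_(j < M1 + M2) (match fintype.split j with inl j1 => F1 j1 | inr j2 => F2 j2 end)
   = \sum_(j < M1) F1 j + \sum_(j < M2) F2 j.
Proof.
rewrite big_split_ord; congr (_ + _); apply: eq_bigr => j _.
  by rewrite (unsplitK (inl _)).
by rewrite (unsplitK (inr _)).
Qed.

Let delta := eps / 2.

Definition Cone (c : V) := exists M (t : 'I_M -> R) (d b : 'I_M -> V),
  [/\ forall j, 0 < t j, forall j, Dp (d j), forall j, Nrm (b j) <= delta &
      c = \sum_(j < M) t j *: (d j + b j - x)].

Lemma Cone0 : Cone 0.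
Proof.
exists 0%N, (fun _ => 0), (fun _ => 0), (fun _ => 0); split; try by case.
by rewrite big_ord0.
Qed.

Lemma ConeD c1 c2 : Cone c1 -> Cone c2 -> Cone (c1 + c2).
Proof.
move=> [M1 [t1 [d1 [b1 [t10 d1D b1N ->]]]]] [M2 [t2 [d2 [b2 [t20 d2D b2N ->]]]]].
exists (M1 + M2)%N, (fun j => match fintype.split j with inl j1 => t1 j1 | inr j2 => t2 j2 end),
  (fun j => match fintype.split j with inl j1 => d1 j1 | inr j2 => d2 j2 end),
  (fun j => match fintype.split j with inl j1 => b1 j1 | inr j2 => b2 j2 end).
split; try by move=> j; case: (fintype.split j).
rewrite -sum_concat; apply: eq_bigr => j _; by case: (fintype.split j).
Qed.

Lemma ConeZ c s : Cone c -> 0 < s -> Cone (s *: c).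
Proof.
move=> [M [t [d [b [t0 dD bN ->]]]]] s0.
exists M, (fun j => s * t j), d, b; split => //.
  by move=> j; rewrite mulr_gt0.
by rewrite scaler_sumr; apply: eq_bigr => j _; rewrite scalerA.
Qed.

Definition pC (z : V) := inf [set Nrm (z - c) | c in Cone].

Lemma pC_le z c : Cone c -> pC z <= Nrm (z - c).
Proof.
move=> Cc; apply: (@inf_le_elt _ _ 0); last by exists c.
by move=> _ [c' _ <-]; exact: Nrm_ge0.
Qed.

Lemma pC_ne z : [set Nrm (z - c) | c in Cone] !=set0.
Proof. by exists (Nrm (z - 0)); exists 0 => //; exact: Cone0. Qed.

Lemma pC_sublin : sublin pC.
Proof.
split.
  move=> z1 z2; apply: le_inf_add; try exact: pC_ne.
  move=> _ _ [c1 C1 <-] [c2 C2 <-].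
  apply: le_trans (pC_le (z1 + z2) _ (ConeD _ _ C1 C2)) _.
  have -> : z1 + z2 - (c1 + c2) = (z1 - c1) + (z2 - c2).
    by rewrite opprD addrACA.
  exact: NrmD.
move=> t z; rewrite le_eqVlt => /orP[/eqP<-|t0].
  rewrite scale0r mul0r; apply: le_trans (pC_le 0 _ Cone0) _.
  by rewrite subr0 /Nrm big1 // => i _; rewrite normr0.
apply: le_inf_scale; [exact: pC_ne | exact: t0 |].
move=> _ [c Cc <-]; apply: le_trans (pC_le _ _ (ConeZ _ _ Cc t0)) _.
by rewrite -scalerBr NrmZ gtr0_norm.
Qed.

Lemma pC_leN z : pC z <= Nrm z.
Proof. by have := pC_le z _ Cone0; rewrite subr0. Qed.

Lemma pC_cone c : Cone c -> pC c <= 0.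
Proof.
move=> Cc; apply: le_trans (pC_le c _ Cc) _.
by rewrite subrr /Nrm big1 // => i _; rewrite normr0.
Qed.


Lemma pC_v : eps <= pC (x - d0).
Proof.
apply: lb_le_inf; first exact: pC_ne.
move=> _ [_ [M [t [d [b [t0 dD bN ->]]]]] <-].
pose T := \sum_(j < M) t j.
have T0 : 0 <= T by apply: sumr_ge0 => j _; exact: ltW.
pose S := 1 + T.
have S0 : 0 < S by rewrite /S; lra.
pose y i (j : 'I_M.+1) := if unlift ord0 j is Some j' then d j' i else d0 i.
pose a (j : 'I_M.+1) := (if unlift ord0 j is Some j' then t j' else 1) / S.
have h1 : forall i j, `|y i j| <= 1.
  move=> i j; rewrite /y; case: unlift => [j'|]; [exact: (dD j').1 i | exact: hd0.1 i].
have h2 : forall j, 0 < a j.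
  by move=> j; rewrite /a; case: unlift => [j'|]; rewrite divr_gt0.
have h3 : \sum_(j < M.+1) a j = 1.
  rewrite big_ord_recl /a unlift_none.
  under eq_bigr do rewrite liftK.
  by rewrite -mulr_suml -mulrDl mulfV // gt_eqF.
have h4 : forall j, Dp (fun i => y i j).
  by move=> j; rewrite /y; case: unlift => [j'|] //=; exact: dD.
have [i Hi] := far _ y a h1 h2 h3 h4.
move: Hi; rewrite big_ord_recl /a /y unlift_none.
under eq_bigr do rewrite liftK.
pose A := \sum_(j < M) t j *: d j i.
pose B := \sum_(j < M) t j *: b j i.
have -> : (1 / S) *: d0 i + \sum_(j < M) (t j / S) *: d j i = S^-1 *: (d0 i + A).
  rewrite scalerDr mul1r scaler_sumr; congr (_ + _); apply: eq_bigr => j _.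
  by rewrite scalerA mulrC.
move=> Hi.
apply: le_trans (Nrm_ge_i _ i).
have -> : (x - d0 - \sum_(j < M) t j *: (d j + b j - x)) i
    = S *: (x i - S^-1 *: (d0 i + A)) - B.
  rewrite !fB sum_fct.
  under eq_bigr do rewrite fZ !fB fD.
  have -> : \sum_(j < M) t j *: (d j i + b j i - x i) = A + B - T *: x i.
    rewrite /A /B /T scaler_suml -big_split -sumrB; apply: eq_bigr => j _.
    by rewrite scalerBr scalerDr.
  rewrite scalerBr scalerA mulfV ?gt_eqF // scale1r /S scalerDl scale1r.
  by rewrite !opprD !opprK !addrA !(addrAC _ (T *: x i)).
have HB : `|B| <= T * delta.
  rewrite /B /T mulr_suml; apply: (le_trans (ler_norm_sum _ _ _)).
  apply: ler_sum => j _; rewrite normrZ gtr0_norm // ler_pM2l //.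
  exact: le_trans (Nrm_ge_i _ i) (bN j).
have HS : S * eps <= `|S *: (x i - S^-1 *: (d0 i + A))|.
  by rewrite normrZ gtr0_norm // ler_pM2l.
have := ler_normB (S *: (x i - S^-1 *: (d0 i + A)) - B) (- B).
rewrite opprK subrK normrN.
move: HB HS; move: (`|B|) (`|_ - B|) (`|S *: _|) => u v w.
have TE : 0 <= T * eps by rewrite mulr_ge0 // ltW.
rewrite /S /delta.
exact: (arith1 TE eps0).
Qed.


Lemma forward_contra (sd : SD2P X) : False.
Proof.
have [g [ga gs gp gv]] := HB_norming pC (x - d0) pC_sublin.
have g0 : g 0 = 0 by rewrite -(scale0r (0 : V)) gs mul0r.
have gN : forall z, g (- z) = - g z by move=> z; rewrite -scaleN1r gs mulN1r.
have gsum : forall (M : nat) (F : 'I_M -> V), g (\sum_(j < M) F j) = \sum_(j < M) g (F j).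
  by move=> M F; apply: (big_morph g ga g0).
pose e_ (i : 'I_n) (y : X) : V := fun j => if j == i then y else 0.
pose gi i y := g (e_ i y).
have decomp : forall z : V, z = \sum_(i < n) e_ i (z i).
  move=> z; apply/funext => j; rewrite sum_fct (bigD1 j) //= /e_ eqxx big1 ?addr0 //.
  by move=> i; rewrite eq_sym => /negPf ->.
have gdec : forall z, g z = \sum_(i < n) gi i (z i).
  by move=> z; rewrite {1}(decomp z) gsum.
have eD : forall i y1 y2, e_ i (y1 + y2) = e_ i y1 + e_ i y2.
  by move=> i y1 y2; apply/funext => j; rewrite fD /e_; case: (j == i); rewrite ?addr0.
have eZ : forall i (a : R) y, e_ i (a *: y) = a *: e_ i y.
  by move=> i a y; apply/funext => j; rewrite fZ /e_; case: (j == i); rewrite ?scaler0.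
have giD : forall i y1 y2, gi i (y1 + y2) = gi i y1 + gi i y2.
  by move=> i y1 y2; rewrite /gi eD ga.
have giZ : forall i a y, gi i (a *: y) = a * gi i y.
  by move=> i a y; rewrite /gi eZ gs.
have gi0 : forall i, gi i 0 = 0 by move=> i; rewrite -(scale0r (0 : X)) giZ mul0r.
have giN : forall i y, gi i (- y) = - gi i y.
  by move=> i y; rewrite -scaleN1r giZ mulN1r.
have Ne : forall i y, Nrm (e_ i y) = `|y|.
  move=> i y; rewrite /Nrm (bigD1 i) //= /e_ eqxx big1 ?addr0 //.
  by move=> j /negPf ->; rewrite normr0.
have gile : forall i y, gi i y <= `|y|.
  by move=> i y; rewrite -(Ne i y); exact: le_trans (gp _) (pC_leN _).
pose ball := [set y : X | `|y| <= 1].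
pose beta i := sup [set gi i y | y in ball].
have hs : forall i, has_sup [set gi i y | y in ball].
  move=> i; split; first by exists (gi i 0); exists 0 => //; rewrite /ball /= normr0 ler01.
  by exists 1 => _ [y yb <-]; exact: le_trans (gile i y) yb.
have gib : forall i y, `|y| <= 1 -> gi i y <= beta i.
  by move=> i y yb; apply: sup_upper_bound (hs i) _ _; exists y.
have b0 : forall i, 0 <= beta i.
  by move=> i; rewrite -(gi0 i); apply: gib; rewrite normr0 ler01.
have b1 : forall i, beta i <= 1.
  move=> i; apply: ge_sup; first exact: (hs i).1.
  by move=> _ [y yb <-]; exact: le_trans (gile i y) yb.
have gib2 : forall i y, gi i y <= beta i * `|y|.
  move=> i y; case: (eqVneq y 0) => [->|y0]; first by rewrite gi0 normr0 mulr0.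
  have ny : 0 < `|y| by rewrite normr_gt0.
  have nyi : 0 <= `|y|^-1 by rewrite invr_ge0 ltW.
  have := gib i (`|y|^-1 *: y).
  rewrite normrZ ger0_norm // mulVf ?lt0r_neq0 // lexx giZ => /(_ isT).
  by rewrite mulrC ler_pdivrMr.
have giabs : forall i y, - (beta i * `|y|) <= gi i y.
  by move=> i y; have := gib2 i (- y); rewrite giN normrN lerNl.
have adh : forall i (eta : R), 0 < eta -> exists2 y, `|y| <= 1 & beta i - eta < gi i y.
  move=> i eta eta0; have [_ [y yb <-] H] := sup_adherent eta0 (hs i).
  by exists y.
have gvpos : 0 < g (x - d0).
  by apply: lt_le_trans gv; apply: lt_le_trans pC_v.
have [k bk | nob] := pickP (fun k => 0 < beta k); last first.
  have bz : forall i, beta i = 0.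
    by move=> i; apply/eqP; rewrite eq_le b0 andbT leNgt nob.
  move: gvpos; rewrite gdec ltNge => /negP; apply.
  apply: (le_trans (ler_sum _ (fun i _ => gib2 i ((x - d0) i)))).
  by rewrite big1 // => i _; rewrite bz mul0r.
pose sel i := if 0 < beta i then i else k.
have bsel : forall i, 0 < beta (sel i) by move=> i; rewrite /sel; case: ifP.
pose f i y := (beta (sel i))^-1 * gi (sel i) y.
have fud : forall i, unit_dual (f i).
  move=> i; have bs := bsel i; have bsi : 0 < (beta (sel i))^-1 by rewrite invr_gt0.
  split.
  - by move=> y1 y2; rewrite /f giD mulrDr.
  - by move=> a y; rewrite /f giZ mulrCA.
  - move=> y; rewrite /f normrM gtr0_norm // ler_pdivrMl //.
    by rewrite ler_norml gib2 andbT giabs.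
  - move=> e e0; have [y yb Hy] := adh (sel i) (beta (sel i) * e) (mulr_gt0 bs e0).
    exists y => //; rewrite /f ltr_pdivlMl // mulrBr mulr1; exact: Hy.
have n0R : 0 < n%:R :> R by rewrite ltr0n.
have delta0 : 0 < delta by rewrite /delta divr_gt0.
pose eta := delta * beta k / (4 * n%:R).
have eta0 : 0 < eta by rewrite /eta !mulr_gt0 // ?invr_gt0 // mulr_gt0.
have [d [hd hdn]] := @sd2p_point _ _ sd n n0 f eta eps fud eta0 eps0.
have gd : forall i, beta i - eta <= gi i (d i).
  move=> i; case: (ltrP 0 (beta i)) => bi.
    have := (hd i).2; rewrite /f /sel bi ltr_pdivlMl // mulrBr mulr1 => H.
    apply: le_trans (ltW H); rewrite lerD2l lerN2.
    by rewrite -[X in _ <= X]mul1r ler_wpM2r // ltW.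
  have bz : beta i = 0 by apply/eqP; rewrite eq_le bi b0.
  by rewrite bz sub0r; apply: le_trans (giabs i (d i)); rewrite bz mul0r oppr0 lerNl oppr0 ltW.
have [yk ykb ykH] := adh k (beta k / 2) (divr_gt0 bk (ltr0n _ 2)).
pose bb : V := e_ k (delta *: yk).
have Nbb : Nrm bb <= delta.
  rewrite /bb Ne normrZ gtr0_norm //.
  by rewrite -[X in _ <= X]mulr1 ler_wpM2l // ltW.
have Cc : Cone (d + bb - x).
  exists 1%N, (fun _ => 1), (fun _ => d), (fun _ => bb); split => //.
  - by move=> j; split => //; move=> i; exact: (hd i).1.
  - by rewrite big_ord1 scale1r.
have := le_trans (gp _) (pC_cone _ Cc).
rewrite ga gN ga (gdec d) (gdec x) /bb -/(gi k _) giZ.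
have S1 : \sum_(i < n) (beta i - eta) <= \sum_(i < n) gi i (d i).
  by apply: ler_sum => i _; exact: gd.
have S2 : \sum_(i < n) gi i (x i) <= \sum_(i < n) beta i.
  apply: ler_sum => i _; apply: le_trans (gib2 i _) _.
  by rewrite -[X in _ <= X]mulr1 ler_wpM2l.
rewrite sumrB sumr_const card_ord in S1.
have neta : eta *+ n = delta * beta k / 4.
  rewrite -mulr_natr /eta invfM mulrA -!mulrA; congr (_ * _).
  by rewrite mulVf ?mulr1 // gt_eqF.
rewrite neta in S1.
have dbk : 0 < delta * beta k by rewrite mulr_gt0.
have hy : delta * beta k / 2 < delta * gi k yk.
  rewrite -mulrA ltr_pM2l //; apply: le_lt_trans ykH.
  by rewrite {2}(splitr (beta k)) addrK.
move: S1 S2 hy dbk.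
move: (\sum_(i < n) beta i) (\sum_(i < n) gi i (d i)) (\sum_(i < n) gi i (x i)) (delta * gi k yk) (delta * beta k) => A1 A2 A3 A4 A5.
clear; move=> *; lra.
Qed.

End Forward.


Section Backward.
Variables (R : realType) (X : normedModType R).

Lemma ltr_sum_ne (I : finType) (i0 : I) (F G : I -> R) :
  (forall i, F i < G i) -> \sum_(i : I) F i < \sum_(i : I) G i.
Proof.
move=> H; rewrite (bigD1 i0) //= [X in _ < X](bigD1 i0) //=.
by apply: ltr_leD; [exact: H | apply: ler_sum => i _; exact: ltW].
Qed.

Lemma cc_norm_le1 n (lam : 'I_n -> R) (d : 'I_n -> X) :
  (forall i, 0 <= lam i) -> \sum_(i < n) lam i = 1 -> (forall i, `|d i| <= 1) ->
  `|\sum_(i < n) lam i *: d i| <= 1.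
Proof.
move=> l0 l1 hd; apply: (le_trans (ler_norm_sum _ _ _)).
rewrite -[X in _ <= X]l1; apply: ler_sum => i _.
by rewrite normrZ ger0_norm // -[X in _ <= X]mulr1 ler_wpM2l.
Qed.

Lemma slice_avg (f : X -> R) (al : R) k (k0 : (0 < k)%N) (F : 'I_k -> X) :
  unit_dual f -> (forall r, slice f al (F r)) -> slice f al (k%:R^-1 *: \sum_(r < k) F r).
Proof.
move=> fu hF; have kR : 0 < k%:R :> R by rewrite ltr0n.
have l1 : \sum_(i < k) k%:R^-1 = 1 :> R.
  by rewrite sumr_const card_ord -[LHS]mulr_natr mulVf // gt_eqF.
split.
  rewrite scaler_sumr; apply: cc_norm_le1 => //.
    by move=> i; exact: (hF i).1.
have [_ fs _ _] := fu.
rewrite fs ud_sum // ltr_pdivlMl //.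
have -> : k%:R * (1 - al) = \sum_(r < k) (1 - al).
  by rewrite sumr_const card_ord mulr_natl.
by apply: (@ltr_sum_ne _ (Ordinal k0)) => r; exact: (hF r).2.
Qed.


Lemma sum_sig (W : nmodType) n (k : 'I_n -> nat) (F : {i : 'I_n & 'I_(k i)} -> W) :
  \sum_(p : {i : 'I_n & 'I_(k i)}) F p =
  \sum_(i < n) \sum_(r : 'I_(k i)) F (Tagged (fun i => 'I_(k i)) r).
Proof.
rewrite (@sig_big_dep _ _ _ _ (fun i => 'I_(k i)) predT (fun _ _ => true)
   (fun i r => F (Tagged (fun i => 'I_(k i)) r))) /=.
by apply: eq_bigr => -[i r] _.
Qed.

Lemma sum_pairb (W : nmodType) (T : finType) (F : T * bool -> W) :
  \sum_(q : T * bool) F q = \sum_(p : T) (F (p, true) + F (p, false)).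
Proof.
transitivity (\sum_(q : T * bool | predT q.1 && predT q.2) F (q.1, q.2)).
  by apply: eq_bigr => -[].
rewrite -(pair_big predT predT (fun p b => F (p, b))) /=.
by apply: eq_bigr => p _; rewrite big_bool.
Qed.

Lemma sum_reindex (W : nmodType) (T : finType) (G : 'I_#|T| -> W) :
  \sum_(c < #|T|) G c = \sum_(q : T) G (enum_rank q).
Proof.
by rewrite (reindex enum_rank) //; apply: onW_bij; exact: enum_rank_bij.
Qed.


Hypothesis cond : forall (n : nat), (0 < n)%N -> forall (x : 'I_n -> X),
     (forall i, `|x i| <= 1) -> forall eps : R, 0 < eps ->
     exists (m : nat) (y : 'I_n -> 'I_m -> X) (a : 'I_m -> R),
       [/\ (forall i j, `|y i j| <= 1),
           (forall j, 0 < a j),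
           \sum_(j < m) a j = 1,
           (forall i, `|x i - \sum_(j < m) a j *: y i j| < eps) &
           (forall j, `|\sum_(i < n) n%:R^-1 *: y i j| > 1 - eps)].

Lemma ud_le1 (f : X -> R) y : unit_dual f -> `|y| <= 1 -> f y <= 1.
Proof.
move=> [_ _ fn _] y1; apply: le_trans (ler_norm _) _; exact: le_trans (fn y) y1.
Qed.

Lemma backward : SD2P X.
Proof.
move=> n lam f alpha lam0 lam1 fud al0.
have ccle1 : forall u, convex_comb_sets lam (fun i => slice (f i) (alpha i)) u -> `|u| <= 1.
  move=> _ [d [hd ->]]; apply: cc_norm_le1 => //.
    by move=> i; exact: ltW.
  by move=> i; exact: (hd i).1.
split.
  move=> u v hu hv; apply: le_trans (ler_normB u v) _.
  by move: (ccle1 _ hu) (ccle1 _ hv); move: `|u| `|v| => a b; lra.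
move=> e e0.
pose K := (Num.truncn (8 * n%:R / e) + n + 1)%N.
have KR : 8 * n%:R / e < K%:R.
  apply: lt_le_trans (truncnS_gt _) _; rewrite ler_nat /K; by rewrite addn1 ltnS leq_addr.
have Kn : n%:R + 1 <= K%:R :> R by rewrite natr1 ler_nat /K; by rewrite addn1 ltnS leq_addl.
have K0 : 0 < K%:R :> R by apply: lt_le_trans Kn; rewrite ltr_pwDr // ler0n.
pose k i := Num.truncn (lam i * K%:R).
have kle : forall i, (k i)%:R <= lam i * K%:R.
  by move=> i; rewrite truncn_le mulr_ge0 // ltW.
have kgt : forall i, lam i * K%:R < (k i)%:R + 1.
  by move=> i; rewrite natr1; exact: truncnS_gt.
pose Nr := \sum_(i < n) (k i)%:R : R.
have NrK : Nr <= K%:R.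
  have <- : \sum_(i < n) lam i * K%:R = K%:R by rewrite -mulr_suml lam1 mul1r.
  by apply: ler_sum => i _; exact: kle.
have NrG : K%:R - n%:R <= Nr.
  have -> : K%:R - n%:R = \sum_(i < n) (lam i * K%:R - 1).
    by rewrite sumrB -mulr_suml lam1 mul1r sumr_const card_ord.
  by apply: ler_sum => i _; rewrite lerBlDr; exact: ltW.
have Nr0 : 0 < Nr.
  apply: lt_le_trans NrG; rewrite subr_gt0; apply: lt_le_trans Kn; rewrite ltrDl ltr01 //.
have [i0 ki0] : exists i, (0 < k i)%N.
  case: (pselect (exists i, (0 < k i)%N)) => // H; exfalso.
  move: Nr0; rewrite /Nr big1 ?ltxx // => i _.
  have : ~ (0 < k i)%N by move=> hk; apply: H; exists i.
  by rewrite lt0n => /negP; rewrite negbK => /eqP ->.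
pose Sig := {i : 'I_n & 'I_(k i)}.
pose Q := (Sig * bool)%type.
pose q0 : Q := (Tagged (fun i => 'I_(k i)) (Ordinal ki0), true).
have nQ0 : (0 < #|{: Q}|)%N by apply/card_gt0P; exists q0.
pose sQ := \sum_(q : Q) (alpha (tag q.1))^-1.
have sQ0 : 0 <= sQ by apply: sumr_ge0 => q _; rewrite invr_ge0 ltW.
pose eps1 := Num.min (e / 4) (2 * sQ + 2)^-1.
have eps10 : 0 < eps1.
  by rewrite /eps1 lt_min divr_gt0 //= invr_gt0; lra.
have eps1e : eps1 <= e / 4 by rewrite /eps1 ge_min lexx.
have eps1s : 2 * eps1 * sQ < 1.
  have : eps1 <= (2 * sQ + 2)^-1 by rewrite /eps1 ge_min lexx orbT.
  rewrite -(ler_pM2l (_ : 0 < 2 * sQ + 2)); last lra.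
  rewrite mulfV; last by apply: lt0r_neq0; lra.
  move=> H; apply: le_lt_trans (_ : _ <= 1 - 2 * eps1) _; last lra.
  by move: H; nra.
have [z hz] : exists z : 'I_n -> X, forall i, `|z i| <= 1 /\ 1 - Num.min eps1 (alpha i) < f i (z i).
  suff H : forall i, exists y, `|y| <= 1 /\ 1 - Num.min eps1 (alpha i) < f i y.
    by have [zz hzz] := choice H; exists zz.
  move=> i; have [_ _ _ fnm] := fud i.
  have mpos : 0 < Num.min eps1 (alpha i) by rewrite lt_min eps10 al0.
  have [y y1 hy] := fnm _ mpos.
  by exists y.
pose sgn (b : bool) : R := if b then 1 else -1.
have sgn2 : forall b, sgn b * sgn b = 1 by case; rewrite /sgn ?mulr1 ?mulrNN ?mulr1.
have nsgn : forall b, `|sgn b| = 1 by case; rewrite /sgn ?normr1 ?normrN1.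
pose pt (q : Q) : X := sgn q.2 *: z (tag q.1).
pose xq (c : 'I_#|{: Q}|) := pt (enum_val c).
have hxq : forall c, `|xq c| <= 1.
  by move=> c; rewrite /xq /pt normrZ nsgn mul1r; exact: (hz _).1.
have [m [y [a [ny apos asum happ hnorm]]]] := cond _ nQ0 xq hxq _ eps10.
pose Y (q : Q) j := y (enum_rank q) j.
pose W (q : Q) j := sgn q.2 *: Y q j.
have nW : forall q j, `|W q j| <= 1 by move=> q j; rewrite normrZ nsgn mul1r; exact: ny.
pose h (q : Q) j := (1 - f (tag q.1) (W q j)) / alpha (tag q.1).
have h0 : forall q j, 0 <= h q j.
  move=> q j; apply: divr_ge0; last exact: ltW.
  by rewrite subr_ge0; exact: ud_le1 (fud _) (nW q j).
have happ' : forall q, `|z (tag q.1) - \sum_(j < m) a j *: W q j| < eps1.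
  move=> q; have := happ (enum_rank q); rewrite /xq enum_rankK /pt.
  have -> : z (tag q.1) - \sum_(j < m) a j *: W q j
      = sgn q.2 *: (sgn q.2 *: z (tag q.1) - \sum_(j < m) a j *: Y q j).
    rewrite scalerBr scalerA sgn2 scale1r scaler_sumr; congr (_ - _).
    by apply: eq_bigr => j _; rewrite /W !scalerA mulrC.
  by rewrite normrZ nsgn mul1r.
have hsum : forall q, \sum_(j < m) a j * h q j < 2 * eps1 / alpha (tag q.1).
  move=> q; have [fa fs fn _] := fud (tag q.1).
  have e1 : \sum_(j < m) a j * h q j = (1 - f (tag q.1) (\sum_(j < m) a j *: W q j)) / alpha (tag q.1).
    rewrite /h; under eq_bigr do rewrite mulrA.
    rewrite -mulr_suml; congr (_ / _).
    rewrite ud_sum //; under [in RHS]eq_bigr do rewrite fs.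
    rewrite -[X in X - _]asum -sumrB; apply: eq_bigr => j _; by rewrite mulrBr mulr1.
  rewrite e1 ltr_pM2r ?invr_gt0 //.
  have := fn (z (tag q.1) - \sum_(j < m) a j *: W q j).
  have := happ' q; have := (hz (tag q.1)).2.
  have mle : Num.min eps1 (alpha (tag q.1)) <= eps1 by rewrite ge_min lexx.
  rewrite -[f _ (_ - _)]/(f (tag q.1) (z (tag q.1) + - \sum_(j < m) a j *: W q j)) fa.
  have -> : f (tag q.1) (- \sum_(j < m) a j *: W q j) = - f (tag q.1) (\sum_(j < m) a j *: W q j).
    by rewrite -scaleN1r fs mulN1r.
  move=> hz1 hap hfn; have := ler_norm (f (tag q.1) (z (tag q.1)) - f (tag q.1) (\sum_(j < m) a j *: W q j)).
  move: hz1 hap hfn mle.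
  move: (f _ (z _)) (f _ (\sum_(j < m) a j *: W q j)) (`|_ - _|) (Num.min _ _) => A1 A2 A3 A4.
  move=> *; lra.
have Hlt : \sum_(j < m) a j * (\sum_(q : Q) h q j) < 1.
  under eq_bigr do rewrite mulr_sumr.
  rewrite exchange_big /=.
  apply: lt_le_trans (_ : _ < \sum_(q : Q) 2 * eps1 / alpha (tag q.1)) _.
    exact: (@ltr_sum_ne _ q0).
  by rewrite -mulr_sumr -/sQ; exact: ltW.
have [j Hj] : exists j, \sum_(q : Q) h q j < 1.
  case: (pselect (exists j, \sum_(q : Q) h q j < 1)) => // H; exfalso.
  move: Hlt; apply/negP; rewrite -leNgt -[X in X <= _]asum.
  apply: ler_sum => j _; rewrite -[X in X <= _]mulr1 ler_pM2l //.
  by rewrite leNgt; apply/negP => hl; apply: H; exists j.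
have inS : forall q, slice (f (tag q.1)) (alpha (tag q.1)) (W q j).
  move=> q; split; first exact: nW.
  have : h q j < 1.
    apply: le_lt_trans Hj; rewrite (bigD1 q) //= lerDl.
    by apply: sumr_ge0 => q' _; exact: h0.
  by rewrite /h ltr_pdivrMr // mul1r ltrBlDr -ltrBlDl.
pose w (p : Sig) := W (p, true) j.
pose w' (p : Sig) := W (p, false) j.
pose E := \sum_(p : Sig) (w p - w' p).
have QR : #|{: Q}|%:R = 2 * Nr.
  have -> : #|{: Q}|%:R = \sum_(q : Q) (1 : R) by rewrite sumr_const.
  rewrite sum_pairb sum_sig /Nr mulr_sumr; apply: eq_bigr => i _.
  by rewrite sumr_const card_ord -[LHS]mulr_natr.
have hn := hnorm j.
have eqn : \sum_(i < #|{: Q}|) #|{: Q}|%:R^-1 *: y i j = #|{: Q}|%:R^-1 *: E.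
  rewrite -scaler_sumr sum_reindex; congr (_ *: _).
  rewrite sum_pairb; apply: eq_bigr => p _.
  by rewrite /w /w' /W /Y /sgn /= scale1r scaleN1r opprK.
move: hn; rewrite eqn => hn.
pose u i := if (0 < k i)%N then (k i)%:R^-1 *: \sum_(r : 'I_(k i)) w (Tagged (fun i => 'I_(k i)) r) else z i.
pose v i := if (0 < k i)%N then (k i)%:R^-1 *: \sum_(r : 'I_(k i)) w' (Tagged (fun i => 'I_(k i)) r) else z i.
have zS : forall i, slice (f i) (alpha i) (z i).
  move=> i; split; first exact: (hz i).1.
  apply: le_lt_trans (hz i).2; rewrite lerD2l lerN2 ge_min lexx orbT //.
have uS : forall i, slice (f i) (alpha i) (u i).
  move=> i; rewrite /u; case: ifP => ki //; apply: slice_avg => // r.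
  exact: (inS (Tagged (fun i => 'I_(k i)) r, true)).
have vS : forall i, slice (f i) (alpha i) (v i).
  move=> i; rewrite /v; case: ifP => ki //; apply: slice_avg => // r.
  exact: (inS (Tagged (fun i => 'I_(k i)) r, false)).
have Edec : E = \sum_(i < n) (k i)%:R *: (u i - v i).
  rewrite /E sum_sig; apply: eq_bigr => i _.
  case: (posnP (k i)) => ki.
    rewrite [in RHS]ki scale0r big1 // => r _; exfalso.
    by case: r => rv; rewrite ki.
  rewrite /u /v ki scalerBr !scalerA mulfV ?scale1r ?sumrB //.
  by rewrite pnatr_eq0 -lt0n.
exists (\sum_(i < n) lam i *: u i), (\sum_(i < n) lam i *: v i); split.
- by exists u; split.
- by exists v; split.
have UV : \sum_(i < n) lam i *: u i - \sum_(i < n) lam i *: v i =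
    K%:R^-1 *: E + \sum_(i < n) (lam i - (k i)%:R / K%:R) *: (u i - v i).
  rewrite -sumrB Edec scaler_sumr -big_split; apply: eq_bigr => i _ /=.
  rewrite -scalerBr scalerA -scalerDl; congr (_ *: _).
  by rewrite [_ * _]mulrC addrC subrK.
have Rb : `|\sum_(i < n) (lam i - (k i)%:R / K%:R) *: (u i - v i)| <= 2 * (1 - Nr / K%:R).
  apply: le_trans (ler_norm_sum _ _ _) _.
  have -> : 2 * (1 - Nr / K%:R) = \sum_(i < n) (lam i - (k i)%:R / K%:R) * 2.
    by rewrite -mulr_suml sumrB lam1 -mulr_suml mulrC.
  apply: ler_sum => i _; rewrite normrZ ger0_norm; last first.
    by rewrite subr_ge0 ler_pdivrMr.
  apply: ler_wpM2l; first by rewrite subr_ge0 ler_pdivrMr.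
  apply: le_trans (ler_normB _ _) _.
  by have := (uS i).1; have := (vS i).1; move: `|u i| `|v i| => a1 a2; lra.
have hE : 2 * Nr * (1 - eps1) < `|E|.
  move: hn; rewrite normrZ QR ger0_norm ?invr_ge0; last by rewrite mulr_ge0 // ltW.
  by rewrite ltr_pdivlMl // mulr_gt0.
have hE' : 2 * (Nr / K%:R) * (1 - eps1) < K%:R^-1 * `|E|.
  by rewrite [K%:R^-1 * _]mulrC mulrA mulrAC ltr_pM2r ?invr_gt0.
rewrite UV.
have := ler_normB (K%:R^-1 *: E + \sum_(i < n) (lam i - (k i)%:R / K%:R) *: (u i - v i))
   (\sum_(i < n) (lam i - (k i)%:R / K%:R) *: (u i - v i)).
rewrite addrK normrZ ger0_norm ?invr_ge0 ?ler0n //.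
have nu1 : Nr / K%:R <= 1 by rewrite ler_pdivrMr // mul1r.
have nu2 : 1 - n%:R / K%:R <= Nr / K%:R.
  by rewrite ler_pdivlMr // mulrBl mul1r divfK ?gt_eqF.
have t8 : 8 * (n%:R / K%:R) < e.
  by rewrite mulrA ltr_pdivrMr // [e * _]mulrC -ltr_pdivrMr.
have ne : Nr / K%:R * eps1 <= eps1 by rewrite ler_piMl // ltW.
move: hE' Rb nu1 nu2 t8 ne eps1e.
move: (K%:R^-1 * `|E|) (`|\sum_(i < n) _ *: (u i - v i)|) (`|_ + _|) (Nr / K%:R) (n%:R / K%:R) => A1 A2 A3 A4 A5.
move=> *; lra.
Qed.

End Backward.

End SD2PHelpers.
Import SD2PHelpers.

Theorem lemma5p5 (R : realType) (X : completeNormedModType R)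
  (nontriv : exists x : X, x != 0) :
  SD2P X <->
  (forall (n : nat), (0 < n)%N -> forall (x : 'I_n -> X),
     (forall i, `|x i| <= 1) -> forall eps : R, 0 < eps ->
     exists (m : nat) (y : 'I_n -> 'I_m -> X) (a : 'I_m -> R),
       [/\ (forall i j, `|y i j| <= 1),
           (forall j, 0 < a j),
           \sum_(j < m) a j = 1,
           (forall i, `|x i - \sum_(j < m) a j *: y i j| < eps) &
           (forall j, `|\sum_(i < n) n%:R^-1 *: y i j| > 1 - eps)]).
Proof.
split; last exact: backward.
move=> sd n n0 x hx eps eps0.
case: (pselect (exists (m : nat) (y : 'I_n -> 'I_m -> X) (a : 'I_m -> R),
       [/\ (forall i j, `|y i j| <= 1),
           (forall j, 0 < a j),
           \sum_(j < m) a j = 1,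
           (forall i, `|x i - \sum_(j < m) a j *: y i j| < eps) &
           (forall j, `|\sum_(i < n) n%:R^-1 *: y i j| > 1 - eps)])) => // Hno.
exfalso.
have far : forall m (y : 'I_n -> 'I_m -> X) (a : 'I_m -> R),
  (forall i j, `|y i j| <= 1) -> (forall j, 0 < a j) -> \sum_(j < m) a j = 1 ->
  (forall j, Dp R X n eps (fun i => y i j)) ->
  exists i, eps <= `|x i - \sum_(j < m) a j *: y i j|.
  move=> m y a h1 h2 h3 h4.
  case: (pselect (exists i, eps <= `|x i - \sum_(j < m) a j *: y i j|)) => // Hi.
  exfalso; apply: Hno; exists m, y, a; split => //.
    move=> i; rewrite ltNge; apply/negP => hi; apply: Hi; by exists i.
  by move=> j; exact: (h4 j).2.
have [f0 f0u] := @exists_unit_dual _ _ nontriv.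
have [d0 [hd0 hd0n]] := @sd2p_point _ _ sd n n0 (fun _ => f0) 1 eps (fun _ => f0u) ltr01 eps0.
have hD : Dp R X n eps d0 by split => // i; exact: (hd0 i).1.
exact: (@forward_contra _ _ n n0 x eps hx eps0 far d0 hD sd).
Qed.
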